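(* Assume (i) the subpolynomial prime gap hypothesis: for every real $\delta>0$ there exists $x_0$ such that for every natural number $x\ge x_0$ there is a prime $p$ with $x-x^{\delta}<p\le x$; and (ii) the Sidon upper bound hypothesis: for every real $\varepsilon>0$ there exist $C\ge0$ and $N_0\in\mathbb{N}$ with $h(N)\le\sqrt{N}+CN^{\varepsilon}$ for all $N\ge N_0$. Then for every real $\varepsilon>0$ there exist $C\ge0$ and $N_0\in\mathbb{N}$ such that $|h(N)-\sqrt{N}|\le C N^{\varepsilon}$ for all $N\ge N_0$.
   Context: A finite set $A\subseteq\mathbb{Z}$ is Sidon if $a+b=c+d$ with $a,b,c,d\in A$ implies $\{a,b\}=\{c,d\}$ as unordered pairs. For a natural number $N$, $h(N)=\max\{|A| : A\subseteq\{1,\dots,N\},\ A\text{ Sidon}\}$. *)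

(* Defs.v *)
From Stdlib Require Import Reals.
From mathcomp Require Import all_boot.
Set Implicit Arguments. Unset Strict Implicit. Unset Printing Implicit Defensive.

Definition sidon (n : nat) (A : {set 'I_n}) : bool :=
  [forall a in A, forall b in A, forall c in A, forall d in A,
     (val a + val b == val c + val d)%N ==>
     (((a == c) && (b == d)) || ((a == d) && (b == c)))].

(* h(N) = max{|A| : A subset {1,...,N}, A Sidon}.  Subsets of {1..N} are
   represented as subsets of 'I_(N+1) = {0..N} not containing 0. *)
Definition h (N : nat) : nat :=
  \max_(A : {set 'I_N.+1} | sidon A && (ord0 \notin A)) #|A|.

(* Real power N^e for a natural N >= 1 (we only use N >= 1 / x >= x0 > 0). *)
Definition rpow (x : nat) (e : R) : R := Rpower (INR x) e.

(* Main.v *)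
Require Import Defs.
From Stdlib Require Import Reals Lia Lra.
From mathcomp Require Import all_boot.
From mathcomp Require Import all_algebra.
From mathcomp Require Import cyclic finfield ring zify.
Import GRing.Theory.
Set Implicit Arguments. Unset Strict Implicit.

Section Comb.
Local Open Scope ring_scope.

Lemma prim_root_Fp p : prime p -> exists g : 'F_p, (p.-1).-primitive_root g.
Proof.
move=> pp; have p_gt1 := prime_gt1 pp.
have n_gt0 : (0 < p.-1)%N by rewrite -subn1 subn_gt0.
set rs := enum (predC1 (0 : 'F_p)).
have /hasP[g _ Hg] : has (p.-1).-primitive_root rs; last by exists g.
apply: has_prim_root n_gt0 _ _ _.
- apply/allP => x; rewrite mem_enum /= => x0; rewrite unity_rootE; apply/eqP.
  apply: (mulIf x0); rewrite mul1r -exprSr prednK; last by apply: ltnW.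
  by rewrite -{2}(expf_card x) card_Fp.
- exact: enum_uniq.
- by rewrite -cardE cardC1 card_Fp.
Qed.

Lemma Fp_val p (pp : prime p) (x : 'F_p) : x = (val x)%:R.
Proof.
apply: ord_inj; rewrite val_Fp_nat // modn_small //.
by have := ltn_ord x; rewrite [X in (_ < X)%N -> _]Fp_cast.
Qed.

Lemma key_quad (F : fieldType) (u v s t : F) :
  u + v = s + t -> u * v = s * t -> (u = s /\ v = t) \/ (u = t /\ v = s).
Proof.
move=> Hs Hp.
have E : (u - s) * (u - t) = 0.
  have -> : (u - s) * (u - t) = u * u - u * (s + t) + s * t by ring.
  rewrite -Hs -Hp; ring.
move/eqP: E; rewrite mulf_eq0 !subr_eq0 => /orP [/eqP us|/eqP ut].
  left; split => //; apply: (addrI u); rewrite Hs us //=.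
right; split => //; apply: (addrI u); rewrite Hs ut addrC //=.
Qed.


Lemma h_lower N p : prime p -> (p * p.-1 <= N)%N -> (p.-1 <= h N)%N.
Proof.
move=> pp hN; have [g Hg] := prim_root_Fp pp.
have p_gt1 := prime_gt1 pp.
have pq : p = p.-1.+1 by rewrite prednK // ltnW.
move: hN Hg; move: (p.-1) pq => q pq hN Hg.
have q_gt0 : (0 < q)%N by rewrite pq in p_gt1.
have m_gt0 : (0 < p * q)%N by rewrite muln_gt0 q_gt0 ltnW.
pose r (i : nat) : nat := val (g ^+ i).
pose c (i : nat) : nat := ((r i * q * q + i * p) %% (p * q))%N.
have cm i : (c i < p * q)%N by rewrite ltn_mod.
have cq i : (c i %% q = i %% q)%N.
  rewrite /c modn_dvdm ?dvdn_mull //.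
  have -> : (r i * q * q + i * p = (r i * q + i) * q + i)%N by rewrite pq; nia.
  by rewrite modnMDl.
have q1 : (q%:R : 'F_p) = -1.
  have : (q + 1)%:R = 0 :> 'F_p by rewrite addn1 -pq pchar_Fp_0.
  by rewrite natrD => /eqP; rewrite addr_eq0 => /eqP.
have cp i : ((c i)%:R : 'F_p) = g ^+ i.
  rewrite /c -(Fp_nat_mod pp) modn_dvdm ?dvdn_mulr // (Fp_nat_mod pp).
  rewrite natrD !natrM (pchar_Fp_0 pp) mulr0 addr0 q1 !mulrN1 opprK /r.
  by rewrite -Fp_val.
have ginj (x y : 'I_q) : g ^+ x = g ^+ y -> x = y.
  move=> e; have : (x == y %[mod q])%N by rewrite -(eq_prim_root_expr Hg) e.
  by rewrite !modn_small // => /eqP /val_inj.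
pose A : {set 'I_N.+1} := [set inord (c i).+1 | i : 'I_q].
have inK i : val (inord (c i).+1 : 'I_N.+1) = (c i).+1.
  by rewrite /= inordK // ltnS; exact: leq_trans (cm i) hN.
have Hinj : injective (fun i : 'I_q => inord (c i).+1 : 'I_N.+1).
  move=> i j /(congr1 val); rewrite !inK => /eqP; rewrite eqSS => /eqP.
  move/(congr1 (modn^~ q)); rewrite !cq !modn_small // => /val_inj //.
have cardA : #|A| = q by rewrite card_imset // card_ord.
rewrite -cardA /h; clear cardA; apply: (leq_bigmax_cond (F := fun B : {set 'I_N.+1} => #|B|)).
apply/andP; split.
  apply/forall_inP => a /imsetP [i _ ->]; apply/forall_inP => b /imsetP [j _ ->].
  apply/forall_inP => a' /imsetP [k _ ->]; apply/forall_inP => b' /imsetP [l _ ->].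
  apply/implyP => /eqP; rewrite !inK => E.
  have E' : (c i + c j = c k + c l)%N by lia.
  have Hq : ((i + j) %% q = (k + l) %% q)%N.
    by rewrite -(modnDm i j q) -(modnDm k l q) -(cq i) -(cq j) -(cq k) -(cq l) !modnDm E'.
  have Hs : g ^+ i + g ^+ j = g ^+ k + g ^+ l by rewrite -!cp -!natrD E'.
  have Hp : g ^+ i * g ^+ j = g ^+ k * g ^+ l.
    by rewrite -!exprD; apply/eqP; rewrite (eq_prim_root_expr Hg); apply/eqP.
  case: (key_quad Hs Hp) => [[/ginj e1 /ginj e2]|[/ginj e1 /ginj e2]]; subst.
    by rewrite !eqxx.
  by rewrite !eqxx orbT.
apply/imsetP => [[i _ /(congr1 val)]]; rewrite inK //.
Qed.

End Comb.

Open Scope R_scope.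

Theorem mainTheorem15 :
  (* (i) subpolynomial prime gaps *)
  (forall delta : R, 0 < delta ->
     exists x0 : nat, forall x : nat, (x0 <= x)%N ->
       exists p : nat, prime p /\ INR x - rpow x delta < INR p /\ (p <= x)%N) ->
  (* (ii) Sidon upper bound *)
  (forall eps : R, 0 < eps ->
     exists (C : R) (N0 : nat), 0 <= C /\ forall N : nat, (N0 <= N)%N ->
       INR (h N) <= sqrt (INR N) + C * rpow N eps) ->
  forall eps : R, 0 < eps ->
    exists (C : R) (N0 : nat), 0 <= C /\ forall N : nat, (N0 <= N)%N ->
      Rabs (INR (h N) - sqrt (INR N)) <= C * rpow N eps.
Proof.
move=> Hi Hii eps eps0.
have [C [N1 [C0 HC]]] := Hii eps eps0.
have [x0 Hx0] := Hi eps eps0.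
exists (Rmax C 3), (maxn N1 (x0.+1 * x0.+1)); split.
  apply: Rle_trans C0 (Rmax_l _ _).
move=> N HN.
have HN1 : (N1 <= N)%N by lia.
have HN2 : (x0.+1 * x0.+1 <= N)%N by lia.
set x := Nat.sqrt N.
have [sq1 sq2] := Nat.sqrt_spec N (Nat.le_0_l N).
have xx0 : (x0 < x)%N.
  rewrite ltnNge; apply/negP => hx.
  have : (x.+1 * x.+1 <= x0.+1 * x0.+1)%N by apply: leq_mul.
  rewrite -/x in sq2; lia.
have [p [pp [Hp1 Hp2]]] := Hx0 x (ltnW xx0).
have Hh : (p.-1 <= h N)%N.
  apply: h_lower => //; rewrite -/x in sq1.
  apply: leq_trans (_ : (x * x <= N)%N); last by apply/leP.
  by apply: leq_mul => //; lia.
have Hh' : INR p <= INR (h N) + 1.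
  rewrite -S_INR; apply: le_INR; have := prime_gt0 pp; lia.
have x1 : 1 <= INR x.
  have : (1 <= x)%N by lia.
  by move/leP/le_INR.
have NR : INR N <= INR N by apply: Rle_refl.
have Npos : 1 <= INR N.
  have : (1 <= N)%N by lia.
  by move/leP/le_INR.
have sqN : sqrt (INR N) <= INR x + 1.
  rewrite -[INR x + 1]sqrt_square; last by lra.
  apply: sqrt_le_1_alt.
  rewrite -/x in sq2.
  have := le_INR _ _ sq2; rewrite !mult_INR !S_INR; lra.
have rx : rpow x eps <= rpow N eps.
  apply: Rle_Rpower_l; first lra.
  split; first lra.
  apply: le_INR; rewrite -/x in sq1; nia.
have r1 : 1 <= rpow N eps.
  have -> : 1 = Rpower 1 eps by rewrite /Rpower ln_1 Rmult_0_r exp_0.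
  apply: Rle_Rpower_l; lra.
have upper := HC N HN1.
have Cm := Rmax_l C 3.
have Cm3 := Rmax_r C 3.
apply: Rabs_le; split.
  have : 3 * rpow N eps <= Rmax C 3 * rpow N eps.
    apply: Rmult_le_compat_r; lra.
  lra.
have : C * rpow N eps <= Rmax C 3 * rpow N eps.
  apply: Rmult_le_compat_r; lra.
lra.
Qed.
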